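(* Let $f,g\in\mathcal{S}(\Omega)$ be tame. Then \[V(f\cdot g)\subseteq V(N(f))\cup V(N(g)).\] If $A$ is nonsingular and, for each $x\in\Omega\setminus\mathbb{R}$, $f'_s(x)$ and $g'_s(x)$ belong to $C_A$, then \[V(f\cdot g)\subseteq\bigcup_{x\in V(f)\cup V(g)}\mathbb{S}_x.\]
   Context: Let $A$ be a finite-dimensional real algebra with unit $1$ ($\mathbb{R}$ identified with $\mathbb{R}1$) which is alternative (the associator $(x,y,z)=(xy)z-x(yz)$ is alternating), with a $^*$-involution $x\mapsto x^c$ (real linear, $(x^c)^c=x$, $(xy)^c=y^cx^c$, $r^c=r$ for $r\in\mathbb{R}$). Let $t(x)=x+x^c$, $n(x)=xx^c$; $A$ is nonsingular if $n(x)=0$ implies $x=0$. Center of $A$: $\{r:(r,a,b)=0,\ ra=ar\ \forall a,b\}$; $C_A=\{0\}\cup\{a:n(a),n(a^c)$ invertible elements of the center$\}$. $\mathbb{S}_A=\{J\in A:t(J)=0,n(J)=1\}$ (assumed non-empty), $Q_A=\mathbb{R}\cup\{x:t(x),n(x)\in\mathbb{R},4n(x)>t(x)^2\}$; every $x\in Q_A$ is $\alpha+\beta J$ with $\alpha,\beta\in\mathbb{R}$, $J\in\mathbb{S}_A$; $x^c=\alpha-\beta J$, $\mathrm{im}(x)=x-t(x)/2$, $\mathbb{S}_x=\{\alpha+\beta I:I\in\mathbb{S}_A\}$. Let $D\subseteq\mathbb{C}$ be non-empty, invariant under conjugation, $\Omega=\{\alpha+\beta J:\alpha+i\beta\in D,J\in\mathbb{S}_A\}$.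 $A_{\mathbb{C}}=\{a+\imath b\}$ with $(a+\imath b)(a'+\imath b')=aa'-bb'+\imath(ab'+ba')$, $\overline{a+\imath b}=a-\imath b$, $(a+\imath b)^c=a^c+\imath b^c$. A stem function $F=F_1+\imath F_2:D\to A_{\mathbb{C}}$ satisfies $F(\bar z)=\overline{F(z)}$ and induces $f=\mathcal{I}(F)$, $f(\alpha+\beta J)=F_1(\alpha+i\beta)+JF_2(\alpha+i\beta)$; $\mathcal{S}(\Omega)$ is the set of these. $f\cdot g=\mathcal{I}(FG)$, $f^c=\mathcal{I}(F^c)$ ($F^c(z)=F(z)^c$), $N(f)=f\cdot f^c$. $f$ is slice preserving if $F_1,F_2$ are real valued; tame if $N(f)$ is slice preserving and $N(f)=N(f^c)$. $V(h)=\{x:h(x)=0\}$. $f'_s(x)=\frac12\mathrm{im}(x)^{-1}(f(x)-f(x^c))$ for $x\in\Omega\setminus\mathbb{R}$. *)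

(* Defs.v *)
From HB Require Import structures.
From mathcomp Require Import all_boot all_order all_algebra.
From mathcomp Require Import boolp classical_sets reals.
Set Implicit Arguments. Unset Strict Implicit. Unset Printing Implicit Defensive.
Import Order.TTheory GRing.Theory Num.Theory.
Local Open Scope ring_scope.
Local Open Scope classical_set_scope.

Record altStarAlg (R : realType) (V : vectType R) := AltStarAlg {
  amul : V -> V -> V;
  aone : V;
  aconj : V -> V;
  amulDl : forall x y z, amul (x + y) z = amul x z + amul y z;
  amulDr : forall x y z, amul x (y + z) = amul x y + amul x z;
  amulZl : forall (r : R) x y, amul (r *: x) y = r *: amul x y;
  amulZr : forall (r : R) x y, amul x (r *: y) = r *: amul x y;
  amul1l : forall x, amul aone x = x;
  amul1r : forall x, amul x aone = x;
  aone_neq0 : aone != 0;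
  alt_xxy : forall x y, amul (amul x x) y - amul x (amul x y) = 0;
  alt_xyx : forall x y, amul (amul x y) x - amul x (amul y x) = 0;
  alt_yxx : forall x y, amul (amul y x) x - amul y (amul x x) = 0;
  aconjD : forall x y, aconj (x + y) = aconj x + aconj y;
  aconjZ : forall (r : R) x, aconj (r *: x) = r *: aconj x;
  aconjK : forall x, aconj (aconj x) = x;
  aconjM : forall x y, aconj (amul x y) = amul (aconj y) (aconj x);
  aconj_real : forall r : R, aconj (r *: aone) = r *: aone
}.

Section Defs.
Variables (R : realType) (V : vectType R) (A : altStarAlg V).

Local Notation mul := (amul A).
Local Notation one := (aone A).
Local Notation cj := (aconj A).

Definition rl (r : R) : V := r *: one.
Definition is_real (x : V) : Prop := exists r : R, x = rl r.

Definition tr (x : V) : V := x + cj x.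
Definition nrm (x : V) : V := mul x (cj x).
Definition assoc (x y z : V) : V := mul (mul x y) z - mul x (mul y z).

Definition nonsingular : Prop := forall x, nrm x = 0 -> x = 0.

Definition central (r : V) : Prop :=
  forall a b, assoc r a b = 0 /\ mul r a = mul a r.
Definition invertible (r : V) : Prop :=
  exists s, mul r s = one /\ mul s r = one.
Definition invertible_central (r : V) : Prop := central r /\ invertible r.

Definition C_A (a : V) : Prop :=
  a = 0 \/ (invertible_central (nrm a) /\ invertible_central (nrm (cj a))).

Definition sphere (J : V) : Prop := tr J = 0 /\ nrm J = one.

(* the domain D ⊆ C is represented as a predicate on pairs (alpha, beta)
   standing for alpha + i beta *)
Definition inOmega (D : R -> R -> Prop) (x : V) : Prop :=
  exists a b J, D a b /\ sphere J /\ x = rl a + b *: J.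

(* stem functions F = F1 + i F2 : D -> A_C, with A_C = A x A *)
Definition stem := ((R -> R -> V) * (R -> R -> V))%type.

Definition is_stem (D : R -> R -> Prop) (F : stem) : Prop :=
  forall a b, D a b -> F.1 a (- b) = F.1 a b /\ F.2 a (- b) = - F.2 a b.

(* product in A_C: (a + ib)(a' + ib') = aa' - bb' + i(ab' + ba') *)
Definition stem_mul (F G : stem) : stem :=
  (fun a b => mul (F.1 a b) (G.1 a b) - mul (F.2 a b) (G.2 a b),
   fun a b => mul (F.1 a b) (G.2 a b) + mul (F.2 a b) (G.1 a b)).

Definition stem_conj (F : stem) : stem :=
  (fun a b => cj (F.1 a b), fun a b => cj (F.2 a b)).

(* the induced slice function I(F): f(alpha + beta J) = F1(alpha,beta) + J F2(alpha,beta);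
   a representation of x is chosen (the value does not depend on it). *)
Definition slice_fun (D : R -> R -> Prop) (F : stem) (x : V) : V :=
  let p := xget ((0 : R), (0 : R), (0 : V))
    [set p : R * R * V | D p.1.1 p.1.2 /\ sphere p.2 /\ x = rl p.1.1 + p.1.2 *: p.2] in
  F.1 p.1.1 p.1.2 + mul p.2 (F.2 p.1.1 p.1.2).

Definition zeroset (D : R -> R -> Prop) (F : stem) (x : V) : Prop :=
  inOmega D x /\ slice_fun D F x = 0.

Definition slice_preserving (D : R -> R -> Prop) (F : stem) : Prop :=
  forall a b, D a b -> is_real (F.1 a b) /\ is_real (F.2 a b).

Definition Nstem (F : stem) : stem := stem_mul F (stem_conj F).

Definition tame (D : R -> R -> Prop) (F : stem) : Prop :=
  slice_preserving D (Nstem F) /\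
  forall x, inOmega D x ->
    slice_fun D (Nstem F) x = slice_fun D (Nstem (stem_conj F)) x.

Definition imx (x : V) : V := x - (2%:R)^-1 *: tr x.

Definition ainv (x : V) : V :=
  xget (0 : V) [set y : V | mul x y = one /\ mul y x = one].

Definition sderiv (D : R -> R -> Prop) (F : stem) (x : V) : V :=
  (2%:R)^-1 *: mul (ainv (imx x)) (slice_fun D F x - slice_fun D F (cj x)).

Definition in_sph (y z : V) : Prop :=
  exists a b J I, sphere J /\ sphere I /\ y = rl a + b *: J /\ z = rl a + b *: I.

End Defs.

(* Main.v *)
Require Import Defs.
From HB Require Import structures.
From mathcomp Require Import all_boot all_order all_algebra.
From mathcomp Require Import boolp classical_sets reals.
From mathcomp Require Import ring lra.
Set Implicit Arguments. Unset Strict Implicit. Unset Printing Implicit Defensive.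
Import GRing.Theory Num.Theory.
Local Open Scope ring_scope.

Section DualS.
Variable M : zmodType.
Definition dual := (int * M)%type.
HB.instance Definition _ := GRing.Zmodule.on dual.
Definition dmul (x y : dual) : dual := (x.1 * y.1, x.2 *~ y.1 + y.2 *~ x.1).
Definition done_ : dual := (1, 0).
Lemma dmulA : associative dmul.
Proof. move=> [a m] [b n] [c o]; rewrite /dmul /=; congr pair; first by rewrite mulrA.
by rewrite !mulrzDl -!mulrzA addrA [c * a]mulrC [b * a]mulrC. Qed.
Lemma dmulC : commutative dmul.
Proof. by move=> [a m] [b n]; rewrite /dmul /= mulrC addrC. Qed.
Lemma dmul1 : left_id done_ dmul.
Proof. by move=> [a m]; rewrite /dmul /= mul1r mul0rz add0r mulr1z. Qed.
Lemma dmulDl : left_distributive dmul +%R.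
Proof. move=> [a m] [b n] [c o]; rewrite /dmul /=; congr pair; first by rewrite mulrDl.
by rewrite mulrzDl mulrzDr addrACA. Qed.
Lemma done_neq0 : done_ != 0.
Proof. by []. Qed.
HB.instance Definition _ := GRing.Zmodule_isComNzRing.Build dual dmulA dmulC dmul1 dmulDl done_neq0.
Definition inj (m : M) : dual := (0, m).
Lemma injD a b : inj (a + b) = inj a + inj b. Proof. by []. Qed.
Lemma injN a : inj (- a) = - inj a. Proof. by rewrite /inj; congr pair; rewrite oppr0. Qed.
Lemma injB a b : inj (a - b) = inj a - inj b. Proof. by rewrite injD injN. Qed.
Lemma inj0 : inj 0 = 0. Proof. by []. Qed.
Lemma injMn a n : inj (a *+ n) = inj a *+ n.
Proof. elim: n => [|n IH]; first by rewrite !mulr0n. by rewrite !mulrS injD IH. Qed.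
Lemma inj_inj a b : inj a = inj b -> a = b. Proof. by case. Qed.
Lemma lc_step (L R : dual) (L1 R1 : M) (c : dual) :
  L1 = R1 -> L - c * (inj L1 - inj R1) = R -> L = R.
Proof. by move=> -> <-; rewrite subrr mulr0 subr0. Qed.
End DualS.

Ltac zmod := apply: inj_inj; rewrite ?(injD, injN, injB, inj0, injMn); ring.

Lemma mulrn_cancel (R : realType) (M : lmodType R) (n : nat) (x y : M) :
  (0 < n)%N -> (x - y) *+ n = 0 -> x = y.
Proof.
move=> n0 h; apply/eqP; rewrite -subr_eq0; apply/eqP.
have : (n%:R : R) *: (x - y) = 0 by rewrite scaler_nat.
move/eqP; rewrite scaler_eq0 pnatr_eq0; case/orP => [/eqP n00|/eqP //].
by rewrite n00 in n0.
Qed.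

Record altax (R : realType) (M : lmodType R) (op : M -> M -> M) (one : M) := AltAx {
  ax_mDl : forall x y z, op (x + y) z = op x z + op y z;
  ax_mDr : forall x y z, op x (y + z) = op x y + op x z;
  ax_m1l : forall x, op one x = x; ax_m1r : forall x, op x one = x;
  ax_aL : forall x y, op (op x x) y = op x (op x y);
  ax_aF : forall x y, op (op x y) x = op x (op y x);
  ax_aR : forall x y, op (op y x) x = op y (op x x) }.

Section Gen.
Variables (R : realType) (M : lmodType R) (op : M -> M -> M) (one : M).
Variable H : altax op one.
Let mDl := ax_mDl H. Let mDr := ax_mDr H. Let m1l := ax_m1l H. Let m1r := ax_m1r H.
Let aL := ax_aL H. Let aF := ax_aF H. Let aR := ax_aR H.

Lemma m0l x : op 0 x = 0.
Proof. by apply/(addrI (op 0 x)); rewrite -mDl !addr0. Qed.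
Lemma m0r x : op x 0 = 0.
Proof. by apply/(addrI (op x 0)); rewrite -mDr !addr0. Qed.
Lemma mNl x y : op (- x) y = - op x y.
Proof. by apply/(addrI (op x y)); rewrite -mDl !subrr m0l. Qed.
Lemma mNr x y : op x (- y) = - op x y.
Proof. by apply/(addrI (op x y)); rewrite -mDr !subrr m0r. Qed.
Lemma mMnl x y n : op (x *+ n) y = op x y *+ n.
Proof. elim: n => [|n IH]; first by rewrite !mulr0n m0l. by rewrite !mulrS mDl IH. Qed.
Lemma mMnr x y n : op x (y *+ n) = op x y *+ n.
Proof. elim: n => [|n IH]; first by rewrite !mulr0n m0r. by rewrite !mulrS mDr IH. Qed.

Definition asc x y z := op (op x y) z - op x (op y z).

Ltac expand := rewrite /asc ?(mDl, mDr, mNl, mNr, m0l, m0r, mMnl, mMnr).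
Ltac fin := expand; rewrite ?(injD, injN, injB, inj0, injMn); ring.

Lemma asL u v w : asc u v w + asc v u w = 0.
Proof.
apply: inj_inj.
apply: (lc_step (c:=1) (aL (u + v) w)).
apply: (lc_step (c:=-1) (aL u w)).
apply: (lc_step (c:=-1) (aL v w)).
fin.
Qed.

Lemma asR u v w : asc u v w + asc u w v = 0.
Proof.
apply: inj_inj.
apply: (lc_step (c:=1) (aR (v + w) u)).
apply: (lc_step (c:=-1) (aR v u)).
apply: (lc_step (c:=-1) (aR w u)).
fin.
Qed.

Lemma moufL x y z : op (op (op x y) x) z = op x (op y (op x z)).
Proof.
apply: (@mulrn_cancel R M 6) => //.
apply: inj_inj.
  apply: (lc_step (c:=4%:R) (asL (op y x) z x)).
  apply: (lc_step (c:=(-4%:R)) (asR (op y x) z x)).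
  apply: (lc_step (c:=2%:R) (asL (op x y) x z)).
  apply: (lc_step (c:=4%:R) (asL (op y x) x z)).
  apply: (lc_step (c:=(-2%:R)) (asR z (op y x) x)).
  apply: (lc_step (c:=2%:R) (asL z (op x x) y)).
  apply: (lc_step (c:=(-2%:R)) (asR z (op x x) y)).
  apply: (lc_step (c:=2%:R) (asL z x (op y x))).
  apply: (lc_step (c:=(-2%:R)) (asR (op x x) z y)).
  apply: (lc_step (c:=2%:R) (asL (op x z) y x)).
  apply: (lc_step (c:=2%:R) (asL (op y z) x x)).
  apply: (lc_step (c:=(-1%:R)) (asR (op y z) x x)).
  apply: (lc_step (c:=(-2%:R)) (asL (op z y) x x)).
  apply: (lc_step (c:=(-2%:R)) (asR y (op x z) x)).
  apply: (lc_step (c:=2%:R) (asL y x (op x z))).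
  apply: (lc_step (c:=(-2%:R)) (asR x (op y z) x)).
  apply: (lc_step (c:=4%:R) (congr1 (op^~ z) (asL y x x))).
  apply: (lc_step (c:=1%:R) (congr1 (op z) (asR y x x))).
  apply: (lc_step (c:=(-2%:R)) (congr1 (op^~ z) (asR y x x))).
  apply: (lc_step (c:=1%:R) (congr1 (op^~ z) (asL x x y))).
  apply: (lc_step (c:=(-2%:R)) (congr1 (op^~ x) (asL z x y))).
  apply: (lc_step (c:=2%:R) (congr1 (op^~ x) (asR z x y))).
  apply: (lc_step (c:=(-2%:R)) (congr1 (op x) (asL z y x))).
  apply: (lc_step (c:=2%:R) (congr1 (op x) (asR y z x))).
  apply: (lc_step (c:=2%:R) (congr1 (op x) (asL y x z))).
fin.
Qed.

Lemma moufM x y z : op (op x y) (op z x) = op x (op (op y z) x).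
Proof.
apply: (@mulrn_cancel R M 6) => //.
apply: inj_inj.
  apply: (lc_step (c:=(-6%:R)) (asL (op x y) z x)).
  apply: (lc_step (c:=6%:R) (asR (op x y) z x)).
  apply: (lc_step (c:=(-4%:R)) (asL (op y x) z x)).
  apply: (lc_step (c:=4%:R) (asR (op y x) z x)).
  apply: (lc_step (c:=(-2%:R)) (asL (op x y) x z)).
  apply: (lc_step (c:=(-4%:R)) (asL (op y x) x z)).
  apply: (lc_step (c:=2%:R) (asR z (op y x) x)).
  apply: (lc_step (c:=(-2%:R)) (asL z (op x x) y)).
  apply: (lc_step (c:=2%:R) (asR z (op x x) y)).
  apply: (lc_step (c:=4%:R) (asL z x (op y x))).
  apply: (lc_step (c:=2%:R) (asR (op x x) z y)).
  apply: (lc_step (c:=4%:R) (asL (op x z) y x)).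
  apply: (lc_step (c:=6%:R) (asL (op z x) y x)).
  apply: (lc_step (c:=(-2%:R)) (asL (op y z) x x)).
  apply: (lc_step (c:=1%:R) (asR (op y z) x x)).
  apply: (lc_step (c:=(-4%:R)) (asL (op z y) x x)).
  apply: (lc_step (c:=3%:R) (asR (op z y) x x)).
  apply: (lc_step (c:=(-4%:R)) (asR y (op x z) x)).
  apply: (lc_step (c:=(-6%:R)) (asR y (op z x) x)).
  apply: (lc_step (c:=4%:R) (asL y x (op x z))).
  apply: (lc_step (c:=6%:R) (asL y x (op z x))).
  apply: (lc_step (c:=2%:R) (asR x (op y z) x)).
  apply: (lc_step (c:=(-6%:R)) (congr1 (op z) (asL y x x))).
  apply: (lc_step (c:=(-4%:R)) (congr1 (op^~ z) (asL y x x))).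
  apply: (lc_step (c:=2%:R) (congr1 (op z) (asR y x x))).
  apply: (lc_step (c:=2%:R) (congr1 (op^~ z) (asR y x x))).
  apply: (lc_step (c:=(-1%:R)) (congr1 (op^~ z) (asL x x y))).
  apply: (lc_step (c:=(-4%:R)) (congr1 (op^~ x) (asL z x y))).
  apply: (lc_step (c:=(-2%:R)) (congr1 (op^~ x) (asR z x y))).
  apply: (lc_step (c:=(-4%:R)) (congr1 (op x) (asL z y x))).
  apply: (lc_step (c:=(-2%:R)) (congr1 (op x) (asR y z x))).
  apply: (lc_step (c:=(-2%:R)) (congr1 (op x) (asL y x z))).
fin.
Qed.

End Gen.

Section Gen2.
Variables (R : realType) (M : lmodType R) (op : M -> M -> M) (one : M).
Variable H : altax op one.
Let mDl := ax_mDl H. Let mDr := ax_mDr H. Let m1l := ax_m1l H. Let m1r := ax_m1r H.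
Let aL := ax_aL H. Let aF := ax_aF H. Let aR := ax_aR H.
Let m0l := m0l H. Let m0r := m0r H. Let mNl := mNl H. Let mNr := mNr H.
Let mMnl := mMnl H. Let mMnr := mMnr H. Let asL := asL H. Let asR := asR H.
Let moufL := moufL H. Let moufM := moufM H.
Local Notation asc := (asc op).

Lemma invL x u : op x u = one -> op u x = one -> forall y, op u (op x y) = y.
Proof.
move=> hxu hux y.
have hsum : forall z, op u (op x z) + op x (op u z) = z *+ 2.
  move=> z; have := asL x u z; rewrite /asc hxu hux !m1l => h.
  apply: inj_inj; apply: (lc_step (c:=-1) h); rewrite ?(injD, injN, injB, inj0, injMn); ring.
have hS : forall z, op x (op u (op x z)) = op x z.
  by move=> z; rewrite -moufL hxu m1l.
have hT : forall z, op u (op x (op u z)) = op u z.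
  by move=> z; rewrite -moufL hux m1l.
set T := op u (op x y).
have e1 : op x (op u T) = T.
  have := hsum T; rewrite {1}/T hS => h.
  apply: inj_inj; apply: (lc_step (c:=1) h); rewrite ?(injD, injN, injB, inj0, injMn); ring.
have eT : T = y *+ 2 - op x (op u y).
  by rewrite -(hsum y) addrK.
have e2 : op x (op u T) = op x (op u y).
  rewrite eT ?(mDr, mNr, mMnr) hT.
  apply: inj_inj; rewrite ?(injD, injN, injB, inj0, injMn); ring.
have e3 : T = op x (op u y) by rewrite -e1 e2.
have := hsum y; rewrite -/T -e3 => h.
apply: (@mulrn_cancel R M 2) => //.
by rewrite mulrnBl mulr2n h subrr.
Qed.


End Gen2.

Lemma altax_op (R : realType) (M : lmodType R) (op : M -> M -> M) (one : M) :
  altax op one -> altax (fun x y => op y x) one.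
Proof.
move=> [mDl mDr m1l m1r aL aF aR]; split => //; try (move=> x y; by rewrite ?aR ?aF ?aL).
Qed.

Section Gen3.
Variables (R : realType) (M : lmodType R) (op : M -> M -> M) (one : M).
Variable H : altax op one.
Let mDl := ax_mDl H. Let mDr := ax_mDr H. Let m1l := ax_m1l H. Let m1r := ax_m1r H.
Let aL := ax_aL H. Let aF := ax_aF H. Let aR := ax_aR H.
Let m0l := m0l H. Let m0r := m0r H. Let mNl := mNl H. Let mNr := mNr H.
Let moufM := moufM H.

Lemma invL' x u : op x u = one -> op u x = one -> forall y, op u (op x y) = y.
Proof. move=> h1 h2 y; exact: (invL H h1 h2 y). Qed.

Lemma invR x u : op x u = one -> op u x = one -> forall y, op (op y x) u = y.
Proof. by move=> h1 h2 y; apply: (invL (altax_op H) h2 h1). Qed.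

Lemma rinj x u y v w : op x u = one -> op u x = one -> op y v = one -> op v y = one ->
  op w (op x y) = 0 -> w = 0.
Proof.
move=> hxu hux hyv hvy h.
have e1 : op y (op v w) = w by apply: (invL' hvy hyv).
have := moufM y (op v w) x; rewrite e1 h => h2.
have e2 : op (op (op v w) x) y = 0.
  by rewrite -(invL' hyv hvy (op (op (op v w) x) y)) -h2 m0r.
have e3 : op (op v w) x = 0 by rewrite -(invR hyv hvy (op (op v w) x)) e2 m0l.
have e4 : op v w = 0 by rewrite -(invR hxu hux (op v w)) e3 m0l.
by rewrite -e1 e4 m0r.
Qed.

Lemma prodinv x u y v : op x u = one -> op u x = one -> op y v = one -> op v y = one ->
  op (op x y) (op v u) = one.
Proof.
move=> hxu hux hyv hvy.
have := moufM (op x y) v u.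
rewrite (invR hyv hvy) (invL' hxu hux) -aF => h.
apply/eqP; rewrite -subr_eq0; apply/eqP.
apply: (rinj hxu hux hyv hvy).
by rewrite mDl mNl -h m1l subrr.
Qed.
End Gen3.

Local Open Scope classical_set_scope.

Section Conc.
Variables (R : realType) (V : vectType R) (A : altStarAlg V).
Local Notation mul := (amul A).
Local Notation one := (aone A).
Local Notation cj := (aconj A).

Lemma eq0_of_sub (x y : V) : x - y = 0 -> x = y.
Proof. by move/eqP; rewrite subr_eq0 => /eqP. Qed.

Lemma altA : altax mul one.
Proof.
split.
- exact: amulDl. - exact: amulDr. - exact: amul1l. - exact: amul1r.
- by move=> x y; apply: eq0_of_sub; apply: alt_xxy.
- by move=> x y; apply: eq0_of_sub; apply: alt_xyx.
- by move=> x y; apply: eq0_of_sub; apply: alt_yxx.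
Qed.

Let mDl := ax_mDl altA. Let mDr := ax_mDr altA. Let m1l := ax_m1l altA. Let m1r := ax_m1r altA.
Let aL := ax_aL altA. Let aF := ax_aF altA. Let aR := ax_aR altA.
Let m0l := m0l altA. Let m0r := m0r altA. Let mNl := mNl altA. Let mNr := mNr altA.
Let mMnl := mMnl altA. Let mMnr := mMnr altA. Let asL := asL altA. Let asR := asR altA.
Local Notation asc := (asc mul).

Ltac expand := rewrite /asc ?(mDl, mDr, mNl, mNr, m0l, m0r, mMnl, mMnr).
Ltac fin := expand; rewrite ?(injD, injN, injB, inj0, injMn); ring.

Definition mulC (X Y : V * V) : V * V :=
  (mul X.1 Y.1 - mul X.2 Y.2, mul X.1 Y.2 + mul X.2 Y.1).
Definition oneC : V * V := (one, 0).

Lemma altC : altax mulC oneC.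
Proof.
split.
- by move=> [x1 x2] [y1 y2] [z1 z2]; rewrite /mulC /=; congr pair; apply: inj_inj; fin.
- by move=> [x1 x2] [y1 y2] [z1 z2]; rewrite /mulC /=; congr pair; apply: inj_inj; fin.
- by move=> [x1 x2]; rewrite /mulC /= !m1l !m0l subr0 addr0.
- by move=> [x1 x2]; rewrite /mulC /= !m1r !m0r subr0 add0r.
- move=> [x1 x2] [y1 y2]; rewrite /mulC /=; congr pair.
- apply: (@mulrn_cancel R V 2) => //; apply: inj_inj.
  apply: (lc_step (c:=1%:R) (asL x1 x1 y1)).
  apply: (lc_step (c:=(-2%:R)) (asL x2 x1 y2)).
  apply: (lc_step (c:=(-1%:R)) (asL x2 x2 y1)).
  fin.
- apply: (@mulrn_cancel R V 2) => //; apply: inj_inj.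
  apply: (lc_step (c:=2%:R) (asL x2 x1 y1)).
  apply: (lc_step (c:=(-1%:R)) (asL x2 x2 y2)).
  apply: (lc_step (c:=1%:R) (asL x1 x1 y2)).
  fin.
- move=> [x1 x2] [y1 y2]; rewrite /mulC /=; congr pair.
- apply: (@mulrn_cancel R V 2) => //; apply: inj_inj.
  apply: (lc_step (c:=2%:R) (asL y1 x1 x1)).
  apply: (lc_step (c:=(-1%:R)) (asR y1 x1 x1)).
  apply: (lc_step (c:=(-2%:R)) (asL x2 y2 x1)).
  apply: (lc_step (c:=2%:R) (asR y2 x2 x1)).
  apply: (lc_step (c:=(-2%:R)) (asL y2 x1 x2)).
  apply: (lc_step (c:=1%:R) (asL x2 x2 y1)).
  apply: (lc_step (c:=(-2%:R)) (asR x2 x2 y1)).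
  fin.
- apply: (@mulrn_cancel R V 2) => //; apply: inj_inj.
  apply: (lc_step (c:=2%:R) (asL x2 y1 x1)).
  apply: (lc_step (c:=(-2%:R)) (asR y1 x2 x1)).
  apply: (lc_step (c:=2%:R) (asL y1 x1 x2)).
  apply: (lc_step (c:=1%:R) (asL x2 x2 y2)).
  apply: (lc_step (c:=(-2%:R)) (asR x2 x2 y2)).
  apply: (lc_step (c:=2%:R) (asL y2 x1 x1)).
  apply: (lc_step (c:=(-1%:R)) (asR y2 x1 x1)).
  fin.
- move=> [x1 x2] [y1 y2]; rewrite /mulC /=; congr pair.
- apply: (@mulrn_cancel R V 2) => //; apply: inj_inj.
  apply: (lc_step (c:=1%:R) (asR y1 x1 x1)).
  apply: (lc_step (c:=(-2%:R)) (asR y2 x2 x1)).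
  apply: (lc_step (c:=(-1%:R)) (asL x2 x2 y1)).
  apply: (lc_step (c:=2%:R) (asR x2 x2 y1)).
  apply: (lc_step (c:=(-2%:R)) (asL x2 y1 x2)).
  fin.
- apply: (@mulrn_cancel R V 2) => //; apply: inj_inj.
  apply: (lc_step (c:=2%:R) (asR y1 x2 x1)).
  apply: (lc_step (c:=(-1%:R)) (asL x2 x2 y2)).
  apply: (lc_step (c:=2%:R) (asR x2 x2 y2)).
  apply: (lc_step (c:=(-2%:R)) (asL x2 y2 x2)).
  apply: (lc_step (c:=1%:R) (asR y2 x1 x1)).
  fin.
Qed.

End Conc.

Section Conc.
Variables (R : realType) (V : vectType R) (A : altStarAlg V).
Local Notation mul := (amul A).
Local Notation one := (aone A).
Local Notation cj := (aconj A).

Let hA := @altA R V A.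
Let mDl := ax_mDl hA. Let mDr := ax_mDr hA. Let m1l := ax_m1l hA. Let m1r := ax_m1r hA.
Let aL := ax_aL hA. Let aF := ax_aF hA. Let aR := ax_aR hA.
Let m0l := m0l hA. Let m0r := m0r hA. Let mNl := mNl hA. Let mNr := mNr hA.
Let mMnl := mMnl hA. Let mMnr := mMnr hA. Let asL := asL hA. Let asR := asR hA.
Local Notation asc := (asc mul).

Ltac expand := rewrite /asc ?(mDl, mDr, mNl, mNr, m0l, m0r, mMnl, mMnr).
Ltac fin := expand; rewrite ?(injD, injN, injB, inj0, injMn); ring.

Lemma mrlL r x : mul (rl A r) x = r *: x.
Proof. by rewrite /rl amulZl m1l. Qed.
Lemma mrlR r x : mul x (rl A r) = r *: x.
Proof. by rewrite /rl amulZr m1r. Qed.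
Lemma cjrl r : cj (rl A r) = rl A r.
Proof. exact: aconj_real. Qed.
Lemma cj0 : cj 0 = 0.
Proof. by have := aconjZ A 0 0; rewrite !scale0r. Qed.
Lemma cjN x : cj (- x) = - cj x.
Proof. by rewrite -scaleN1r aconjZ scaleN1r. Qed.
Lemma cjB x y : cj (x - y) = cj x - cj y.
Proof. by rewrite aconjD cjN. Qed.
Lemma rlD r s : rl A (r + s) = rl A r + rl A s.
Proof. by rewrite /rl scalerDl. Qed.
Lemma rl0 : rl A 0 = 0.
Proof. by rewrite /rl scale0r. Qed.
Lemma rl1 : rl A 1 = one.
Proof. by rewrite /rl scale1r. Qed.
Lemma rl_inj r s : rl A r = rl A s -> r = s.
Proof.
move=> h; apply/eqP; rewrite -subr_eq0; apply/eqP.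
have : (r - s) *: one = 0 by rewrite scalerBl -/(rl A r) -/(rl A s) h subrr.
by move/eqP; rewrite scaler_eq0 (negbTE (aone_neq0 A)) orbF => /eqP.
Qed.

Lemma sph_cj J : sphere A J -> cj J = - J.
Proof. rewrite /sphere /tr => -[hT _]; apply/eqP; rewrite -addr_eq0 addrC; exact/eqP. Qed.
Lemma sph_sq J : sphere A J -> mul J J = - one.
Proof.
move=> hJ; have := hJ.2; rewrite /nrm (sph_cj hJ) mNr => <-.
by rewrite opprK.
Qed.
Lemma sph_neg J : sphere A J -> sphere A (- J).
Proof.
move=> hJ; rewrite /sphere; split.
- by rewrite /tr cjN (sph_cj hJ) opprK addrC subrr.
- by rewrite /nrm cjN (sph_cj hJ) opprK mNl (sph_sq hJ) opprK.
Qed.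
Lemma sph_JJ J x : sphere A J -> mul J (mul J x) = - x.
Proof. by move=> hJ; rewrite -aL (sph_sq hJ) mNl m1l. Qed.
Lemma sph_canc J x : sphere A J -> mul J x = 0 -> x = 0.
Proof. by move=> hJ h; rewrite -[x]opprK -(sph_JJ x hJ) h m0r oppr0. Qed.
Lemma sph_neq0 J : sphere A J -> J != 0.
Proof.
move=> hJ; apply/eqP => J0; have := hJ.2; rewrite /nrm J0 m0l => /esym/eqP.
by rewrite (negbTE (aone_neq0 A)).
Qed.

Lemma tr_pt a b J : sphere A J -> tr A (rl A a + b *: J) = rl A (a + a).
Proof.
move=> hJ; rewrite /tr aconjD cjrl aconjZ (sph_cj hJ) rlD.
by rewrite scalerN addrACA subrr addr0.
Qed.

Lemma nrm_sc b J : sphere A J -> nrm A (b *: J) = rl A (b * b).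
Proof. by move=> hJ; have h := hJ.2; rewrite /nrm in h *; rewrite aconjZ amulZl amulZr scalerA h. Qed.

Lemma rep_unique a b J a' b' J' : sphere A J -> sphere A J' ->
  rl A a + b *: J = rl A a' + b' *: J' ->
  a' = a /\ ((b' = b /\ J' = J) \/ (b' = - b /\ J' = - J) \/ (b = 0 /\ b' = 0)).
Proof.
move=> hJ hJ' e.
have ea : a' = a.
  have := congr1 (tr A) e; rewrite (tr_pt _ _ hJ) (tr_pt _ _ hJ') => /rl_inj; lra.
split => //; subst a'.
have e2 : b *: J = b' *: J' by move: e => /addrI.
have eb : b' * b' = b * b.
  by apply: rl_inj; rewrite -(nrm_sc _ hJ') -(nrm_sc _ hJ) e2.
have [b0|bn0] := eqVneq b 0.
  subst b; right; right; split => //; move: eb; rewrite mulr0 => /eqP.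
  by rewrite mulf_eq0 orbb => /eqP.
have : (b' - b) * (b' + b) = 0 by rewrite mulrBl !mulrDr eb; ring.
move/eqP; rewrite mulf_eq0 => /orP [/eqP h|/eqP h].
- have eb' : b' = b by apply/eqP; rewrite -subr_eq0 h.
  subst b'; left; split => //.
  by rewrite -[J']scale1r -(mulVf bn0) -scalerA -e2 scalerA mulVf // scale1r.
- have eb' : b' = - b by apply/eqP; rewrite -addr_eq0 h.
  subst b'; right; left; split => //.
  rewrite -[J']scale1r -(mulVf bn0) -scalerA.
  by rewrite -[b *: J'](opprK) -scaleNr -e2 scalerN scalerA mulVf // scale1r.
Qed.

Lemma stem2_0 D (Hs : stem V) a : is_stem D Hs -> D a 0 -> Hs.2 a 0 = 0.
Proof.
move=> hs d; have := (hs a 0 d).2; rewrite oppr0 => /eqP.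
rewrite -addr_eq0 -mulr2n => /eqP h; apply: (@mulrn_cancel R V 2) => //.
by rewrite subr0.
Qed.

Lemma slice_eval D (Hs : stem V) a b J : is_stem D Hs -> D a b -> sphere A J ->
  slice_fun A D Hs (rl A a + b *: J) = Hs.1 a b + mul J (Hs.2 a b).
Proof.
move=> hs d hJ; rewrite /slice_fun.
set P := (X in xget _ X).
have : P (xget (0, 0, 0) P) by apply: (@xgetI _ _ P (a, b, J)); split.
case: (xget _ P) => [[a' b'] J'] [d' [hJ' e]].
move: d' hJ' e => /= d' hJ' e; rewrite /=.
have [-> [[-> ->]|[[-> ->]|[b0 b'0]]]] := rep_unique hJ hJ' e.
- by [].
- by have [-> ->] := hs a b d; rewrite mNl mNr opprK.
- subst b b'; by rewrite (stem2_0 hs d) !m0r.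
Qed.

End Conc.

Section Conc.
Variables (R : realType) (V : vectType R) (A : altStarAlg V).
Local Notation mul := (amul A).
Local Notation one := (aone A).
Local Notation cj := (aconj A).

Let hA := @altA R V A.
Let mDl := ax_mDl hA. Let mDr := ax_mDr hA. Let m1l := ax_m1l hA. Let m1r := ax_m1r hA.
Let aL := ax_aL hA. Let aF := ax_aF hA. Let aR := ax_aR hA.
Let m0l := m0l hA. Let m0r := m0r hA. Let mNl := mNl hA. Let mNr := mNr hA.
Let mMnl := mMnl hA. Let mMnr := mMnr hA. Let asL := asL hA. Let asR := asR hA.
Local Notation asc := (asc mul).

Ltac expand := rewrite /asc ?(mDl, mDr, mNl, mNr, m0l, m0r, mMnl, mMnr).
Ltac fin := expand; rewrite ?(injD, injN, injB, inj0, injMn); ring.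


Let hC := @altC R V A.
Local Notation mulC := (mulC A).
Local Notation oneC := (oneC A).

Definition cs (k1 k2 : R) (X : V * V) : V * V :=
  (k1 *: X.1 - k2 *: X.2, k1 *: X.2 + k2 *: X.1).
Definition cjC (X : V * V) : V * V := (cj X.1, cj X.2).

Lemma mulC_csR k1 k2 X Y : mulC X (cs k1 k2 Y) = cs k1 k2 (mulC X Y).
Proof.
case: X => x1 x2; case: Y => y1 y2; rewrite /mulC /cs /=; congr pair;
rewrite ?(mDl, mDr, mNl, mNr, amulZl, amulZr, scalerDr, scalerN, scalerBr); zmod.
Qed.
Lemma mulC_csL k1 k2 X Y : mulC (cs k1 k2 X) Y = cs k1 k2 (mulC X Y).
Proof.
case: X => x1 x2; case: Y => y1 y2; rewrite /mulC /cs /=; congr pair;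
rewrite ?(mDl, mDr, mNl, mNr, amulZl, amulZr, scalerDr, scalerN, scalerBr); zmod.
Qed.
Lemma cs_rl k1 k2 n1 n2 :
  cs k1 k2 (rl A n1, rl A n2) = (rl A (k1 * n1 - k2 * n2), rl A (k1 * n2 + k2 * n1)).
Proof. by rewrite /cs /rl /= !scalerA scalerBl scalerDl. Qed.

Lemma invC (X : V * V) (n1 n2 : R) : ~ (n1 = 0 /\ n2 = 0) ->
  mulC X (cjC X) = (rl A n1, rl A n2) -> mulC (cjC X) X = (rl A n1, rl A n2) ->
  exists U, mulC X U = oneC /\ mulC U X = oneC.
Proof.
move=> hn h1 h2.
set d := n1 * n1 + n2 * n2.
have d0 : d != 0.
  apply/eqP => d0; apply: hn; rewrite /d in d0; split; nra.
exists (cs (n1 / d) (- n2 / d) (cjC X)).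
have e1 : n1 / d * n1 - - n2 / d * n2 = 1 by rewrite /d; field.
have e2 : n1 / d * n2 + - n2 / d * n1 = 0 by rewrite /d; field.
rewrite mulC_csR mulC_csL h1 h2 cs_rl e1 e2 rl1 rl0; split => //.
Qed.

Lemma core1 J (F G : V * V) n1 n2 m1 m2 : sphere A J ->
  mulC F (cjC F) = (rl A n1, rl A n2) -> mulC (cjC F) F = (rl A n1, rl A n2) ->
  mulC G (cjC G) = (rl A m1, rl A m2) -> mulC (cjC G) G = (rl A m1, rl A m2) ->
  (mulC F G).1 + mul J (mulC F G).2 = 0 ->
  (n1 = 0 /\ n2 = 0) \/ (m1 = 0 /\ m2 = 0).
Proof.
move=> hJ hF1 hF2 hG1 hG2 h.
case: (pselect (n1 = 0 /\ n2 = 0)) => [hn|hn]; first by left.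
case: (pselect (m1 = 0 /\ m2 = 0)) => [hm|hm]; first by right.
have [U [hU1 hU2]] := invC hn hF1 hF2.
have [W [hW1 hW2]] := invC hm hG1 hG2.
have E : forall P : V * V, P.1 + mul J P.2 = 0 -> mulC (one, - J) P = 0.
  case=> p1 p2 /= hp.
  have hP1 : p1 = - mul J p2 by apply/eqP; rewrite -addr_eq0 hp.
  rewrite /mulC /= !m1l !mNl opprK hp; congr pair.
  by rewrite hP1 mNr opprK (sph_JJ _ hJ) subrr.
have := rinj hC hU1 hU2 hW1 hW2 (E _ h).
case=> /eqP; by rewrite (negbTE (aone_neq0 A)).
Qed.

End Conc.

Section Conc.
Variables (R : realType) (V : vectType R) (A : altStarAlg V).
Local Notation mul := (amul A).
Local Notation one := (aone A).
Local Notation cj := (aconj A).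

Let hA := @altA R V A.
Let mDl := ax_mDl hA. Let mDr := ax_mDr hA. Let m1l := ax_m1l hA. Let m1r := ax_m1r hA.
Let aL := ax_aL hA. Let aF := ax_aF hA. Let aR := ax_aR hA.
Let m0l := m0l hA. Let m0r := m0r hA. Let mNl := mNl hA. Let mNr := mNr hA.
Let mMnl := mMnl hA. Let mMnr := mMnr hA. Let asL := asL hA. Let asR := asR hA.
Local Notation asc := (asc mul).

Ltac expand := rewrite /asc ?(mDl, mDr, mNl, mNr, m0l, m0r, mMnl, mMnr).
Ltac fin := expand; rewrite ?(injD, injN, injB, inj0, injMn); ring.


Section Nuc.
Variable k : V.
Hypothesis hk : central A k.
Lemma cL a b : mul (mul k a) b = mul k (mul a b).
Proof. by apply: eq0_of_sub; have [h _] := hk a b; exact: h. Qed.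
Lemma cC a : mul k a = mul a k.
Proof. by have [_ h] := hk a a. Qed.
Lemma cM a b : mul (mul a k) b = mul a (mul k b).
Proof.
apply: eq0_of_sub; have := asL a k b; have [h _] := hk a b.
rewrite /asc; rewrite /assoc in h; rewrite h addr0 => //.
Qed.
Lemma cR a b : mul (mul a b) k = mul a (mul b k).
Proof.
apply: eq0_of_sub; have := asR a b k.
by rewrite {2}/asc (cM a b) subrr addr0.
Qed.
End Nuc.

Lemma cinv_left c s w : central A c -> mul s c = one -> mul s (mul c w) = w.
Proof.
move=> hc hsc; have := asL s c w; rewrite /asc.
have [h _] := hc s w; rewrite /assoc in h; rewrite h addr0 hsc m1l => /eqP.
by rewrite subr_eq0 => /eqP <-.
Qed.

Lemma cinv_central c s : central A c -> mul c s = one -> mul s c = one -> central A s.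
Proof.
move=> hc hcs hsc.
have comm : forall a, mul s a = mul a s.
  move=> a; rewrite -(cinv_left (mul s a) hc hsc) -(cinv_left (mul a s) hc hsc).
  by rewrite -(cL hc) hcs m1l -(cL hc) (cC hc) (cM hc) hcs m1r.
move=> a b; split; last exact: comm.
rewrite /assoc; apply/eqP; rewrite subr_eq0; apply/eqP.
rewrite -(cinv_left (mul (mul s a) b) hc hsc) -(cinv_left (mul s (mul a b)) hc hsc).
by rewrite -(cL hc) -(cL hc) hcs m1l -(cL hc) hcs m1l.
Qed.

Lemma cj_one : cj one = one.
Proof. by have := cjrl A 1; rewrite rl1. Qed.

Lemma cinv_cj c s : central A c -> cj c = c -> mul c s = one -> mul s c = one -> cj s = s.
Proof.
move=> hc hcc hcs hsc.
have h1 : mul c (cj s) = one by rewrite -hcc -aconjM hsc cj_one.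
by rewrite -(cinv_left (cj s) hc hsc) h1 m1r.
Qed.

Lemma central_scale t c : t != 0 -> central A (t *: c) -> central A c.
Proof.
move=> t0 h a b; have [h1 h2] := h a b; split.
- move: h1; rewrite /assoc !amulZl -scalerBr => /eqP; rewrite scaler_eq0 (negbTE t0) /=.
  by move/eqP.
- move: h2; rewrite amulZl amulZr => /(congr1 (fun v => t^-1 *: v)).
  by rewrite !scalerA mulVf // !scale1r.
Qed.

Lemma invertible_scale t c : t != 0 -> invertible A (t *: c) -> invertible A c.
Proof.
move=> t0 [s [h1 h2]]; exists (t *: s); split.
- by rewrite amulZr -amulZl.
- by rewrite amulZl -amulZr.
Qed.

Lemma nrm_scale t x : nrm A (t *: x) = (t * t) *: nrm A x.
Proof. by rewrite /nrm aconjZ amulZl amulZr scalerA. Qed.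

End Conc.

Section Conc.
Variables (R : realType) (V : vectType R) (A : altStarAlg V).
Local Notation mul := (amul A).
Local Notation one := (aone A).
Local Notation cj := (aconj A).

Let hA := @altA R V A.
Let mDl := ax_mDl hA. Let mDr := ax_mDr hA. Let m1l := ax_m1l hA. Let m1r := ax_m1r hA.
Let aL := ax_aL hA. Let aF := ax_aF hA. Let aR := ax_aR hA.
Let m0l := m0l hA. Let m0r := m0r hA. Let mNl := mNl hA. Let mNr := mNr hA.
Let mMnl := mMnl hA. Let mMnr := mMnr hA. Let asL := asL hA. Let asR := asR hA.
Local Notation asc := (asc mul).

Ltac expand := rewrite /asc ?(mDl, mDr, mNl, mNr, m0l, m0r, mMnl, mMnr).
Ltac fin := expand; rewrite ?(injD, injN, injB, inj0, injMn); ring.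


Lemma sderiv_eval D (F : stem V) a b J : is_stem D F -> D a b -> sphere A J -> b != 0 ->
  sderiv A D F (rl A a + b *: J) = b^-1 *: F.2 a b.
Proof.
move=> hs d hJ b0.
have him : imx A (rl A a + b *: J) = b *: J.
  rewrite /imx (tr_pt _ _ hJ) /rl scalerA.
  have -> : (2%:R)^-1 * (a + a) = a :> R by field.
  by rewrite addrAC subrr add0r.
have hinv : ainv A (b *: J) = - b^-1 *: J.
  rewrite /ainv; set S := (X in xget _ X).
  have : S (xget 0 S).
    apply: (@xgetI _ _ S (- b^-1 *: J)); split.
    - by rewrite amulZl amulZr scalerA (sph_sq hJ) scalerN -scaleNr mulrN mulfV // opprK scale1r.
    - by rewrite amulZl amulZr scalerA (sph_sq hJ) scalerN -scaleNr mulNr mulVf // opprK scale1r.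
  move: (xget 0 S) => y [h1 _].
  have := congr1 (mul J) h1; rewrite amulZl amulZr (sph_JJ _ hJ) m1r => h.
  by rewrite -h scalerA mulNr mulVf // scaleN1r opprK.
rewrite /sderiv him hinv.
have hcj : cj (rl A a + b *: J) = rl A a + b *: (- J).
  by rewrite aconjD cjrl aconjZ (sph_cj hJ).
rewrite hcj (slice_eval hs d hJ) (slice_eval hs d (sph_neg hJ)).
have -> : F.1 a b + mul J (F.2 a b) - (F.1 a b + mul (- J) (F.2 a b)) = mul J (F.2 a b) *+ 2.
  by rewrite mNl; zmod.
rewrite mMnr amulZl (sph_JJ _ hJ) -scaler_nat !scalerA scalerN -scaleNr.
congr (_ *: _); by rewrite mulVf ?pnatr_eq0 // mul1r opprK.
Qed.

Lemma lemma2 D (F : stem V) a b J : nonsingular A -> is_stem D F -> D a b -> sphere A J ->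
  (b != 0 -> C_A A (sderiv A D F (rl A a + b *: J))) ->
  mul (F.1 a b) (cj (F.1 a b)) - mul (F.2 a b) (cj (F.2 a b)) = 0 ->
  mul (F.1 a b) (cj (F.2 a b)) + mul (F.2 a b) (cj (F.1 a b)) = 0 ->
  mul (cj (F.1 a b)) (F.1 a b) - mul (cj (F.2 a b)) (F.2 a b) = 0 ->
  mul (cj (F.1 a b)) (F.2 a b) + mul (cj (F.2 a b)) (F.1 a b) = 0 ->
  exists y, zeroset A D F y /\ in_sph A y (rl A a + b *: J).
Proof.
move=> ns hs d hJ hC e1 e2 e3 e4.
set f1 := F.1 a b in e1 e2 e3 e4 *; set f2 := F.2 a b in e1 e2 e3 e4 *.
have zf : forall I, sphere A I -> f1 + mul I f2 = 0 ->
    exists y, zeroset A D F y /\ in_sph A y (rl A a + b *: J).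
  move=> I hI h; exists (rl A a + b *: I); split; last by exists a, b, I, J.
  split; first by exists a, b, I.
  by rewrite (slice_eval hs d hI).
have f20 : f2 = 0 -> f1 = 0.
  by move=> h; apply: ns; rewrite /nrm; move: e1; rewrite h m0l subr0.
have [b0|b0] := eqVneq b 0.
  have h2 : f2 = 0 by rewrite /f2 b0; apply: (stem2_0 hs); rewrite -b0.
  by apply: (zf J hJ); rewrite h2 (f20 h2) m0r addr0.
have := hC b0; rewrite (sderiv_eval hs d hJ b0) => -[h0|[h1 h2]].
  have h2 : f2 = 0.
    move/eqP: h0; rewrite scaler_eq0 invr_eq0 (negbTE b0) /= => /eqP.
    by [].
  by apply: (zf J hJ); rewrite h2 (f20 h2) m0r addr0.
have bb0 : b^-1 * b^-1 != 0 by rewrite mulf_neq0 // invr_eq0.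
move: h1 h2; rewrite /invertible_central aconjZ !nrm_scale => -[c1 c2] [c1' c2'].
have {c1}hc := central_scale bb0 c1; have {c2}[s [hcs hsc]] := invertible_scale bb0 c2.
have {c1'}hc' := central_scale bb0 c1'; have {c2'}[s' [hcs' hsc']] := invertible_scale bb0 c2'.
move: hc hcs hsc hc' hcs' hsc'; rewrite /nrm aconjK.
set c := mul f2 (cj f2); set c' := mul (cj f2) f2 => hc hcs hsc hc' hcs' hsc'.
have ecc : c' = c.
  have h1 : mul f2 (c' - c) = 0.
    by rewrite mDr mNr /c' -aF -/c (cC hc) subrr.
  have h2 : mul (cj f2) (mul f2 (c' - c)) = mul c' (c' - c).
    by rewrite !mDr !mNr -(cR hc') -(cR hc).
  by apply: eq0_of_sub; rewrite -(cinv_left (c' - c) hc' hsc') -h2 h1 !m0r.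
have hs_c := cinv_central hc hcs hsc.
have ef1 : mul f1 (cj f1) = c by apply: eq0_of_sub.
have ef1' : mul (cj f1) f1 = c by rewrite -ecc; apply: eq0_of_sub.
set u := mul s (cj f2).
have hu1 : mul f2 u = one by rewrite /u (cC hs_c) -(cR hs_c) -/c.
have hu2 : mul u f2 = one by rewrite /u (cL hs_c) -/c' ecc.
have hcjc : cj c = c by rewrite /c aconjM aconjK.
have hcjs := cinv_cj hc hcjc hcs hsc.
apply: (zf (- mul f1 u)).
- rewrite /sphere; split.
  + rewrite /tr cjN aconjM /u aconjM aconjK hcjs.
    rewrite (cC hs_c (cj f2)) -(cR hs_c) -(cC hs_c f2) (cL hs_c) (cC hs_c (mul f2 (cj f1))).
    by rewrite -opprD -mDl e2 m0l oppr0.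
  + rewrite /nrm cjN aconjM /u aconjM aconjK hcjs mNl mNr opprK.
    have hx1 : mul f1 (mul s (cj f1)) = one by rewrite (cC hs_c) -(cR hs_c) ef1.
    have hx2 : mul (mul s (cj f1)) f1 = one by rewrite (cL hs_c) ef1'.
    have hy1 : mul (cj f2) (mul f2 s) = one by rewrite -(cR hs_c) -/c' ecc.
    have hy2 : mul (mul f2 s) (cj f2) = one by rewrite -(cC hs_c) (cL hs_c) -/c.
    have P := prodinv hA hx1 hx2 hy1 hy2.
    rewrite -{}P -!(cC hs_c f2) !(cL hs_c) (cC hs_c (cj f2)) (cC hs_c (cj f1)).
    rewrite -(cR hs_c f1 (cj f2)) -(cR hs_c f2 (cj f1)) -(cC hs_c (mul f2 (cj f1))).
    by rewrite -(cM hs_c (mul f1 (cj f2)) (mul s (mul f2 (cj f1)))).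
- by rewrite mNl (invR hA hu2 hu1) subrr.
Qed.

End Conc.

Section Conc.
Variables (R : realType) (V : vectType R) (A : altStarAlg V).
Local Notation mul := (amul A).
Local Notation one := (aone A).
Local Notation cj := (aconj A).

Let hA := @altA R V A.
Let mDl := ax_mDl hA. Let mDr := ax_mDr hA. Let m1l := ax_m1l hA. Let m1r := ax_m1r hA.
Let aL := ax_aL hA. Let aF := ax_aF hA. Let aR := ax_aR hA.
Let m0l := m0l hA. Let m0r := m0r hA. Let mNl := mNl hA. Let mNr := mNr hA.
Let mMnl := mMnl hA. Let mMnr := mMnr hA. Let asL := asL hA. Let asR := asR hA.
Local Notation asc := (asc mul).

Ltac expand := rewrite /asc ?(mDl, mDr, mNl, mNr, m0l, m0r, mMnl, mMnr).
Ltac fin := expand; rewrite ?(injD, injN, injB, inj0, injMn); ring.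


Lemma is_stem_mul D (F G : stem V) : is_stem D F -> is_stem D G -> is_stem D (stem_mul A F G).
Proof.
move=> hF hG a b d; have [f1 f2] := hF a b d; have [g1 g2] := hG a b d.
by rewrite /stem_mul /= f1 f2 g1 g2 !mNl !mNr opprK -opprD.
Qed.
Lemma is_stem_conj D (F : stem V) : is_stem D F -> is_stem D (stem_conj A F).
Proof.
by move=> hF a b d; have [f1 f2] := hF a b d; rewrite /stem_conj /= f1 f2 cjN.
Qed.
Lemma is_stem_N D (F : stem V) : is_stem D F -> is_stem D (Nstem A F).
Proof. by move=> hF; apply: is_stem_mul => //; apply: is_stem_conj. Qed.

Lemma two_eq J N1 N2 M1 M2 : sphere A J -> N1 + mul J N2 = M1 + mul J M2 ->
  N1 + mul (- J) N2 = M1 + mul (- J) M2 -> N1 = M1 /\ N2 = M2.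
Proof.
move=> hJ t1 t2.
have e1 : N1 = M1.
  apply: (@mulrn_cancel R V 2) => //.
  have -> : (N1 - M1) *+ 2 = (N1 + mul J N2 - (M1 + mul J M2)) + (N1 + mul (- J) N2 - (M1 + mul (- J) M2)).
    by rewrite !mNl; zmod.
  by rewrite t1 t2 !subrr addr0.
split => //.
apply: eq0_of_sub; apply: (sph_canc hJ); rewrite mDr mNr; apply/eqP; rewrite subr_eq0; apply/eqP.
by move: t1; rewrite e1 => /addrI.
Qed.

Lemma tame_pt D (F : stem V) a b J : tame A D F -> is_stem D F -> D a b -> sphere A J ->
  exists n1 n2,
  [/\ mul (F.1 a b) (cj (F.1 a b)) - mul (F.2 a b) (cj (F.2 a b)) = rl A n1,
      mul (F.1 a b) (cj (F.2 a b)) + mul (F.2 a b) (cj (F.1 a b)) = rl A n2,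
      mul (cj (F.1 a b)) (F.1 a b) - mul (cj (F.2 a b)) (F.2 a b) = rl A n1 &
      mul (cj (F.1 a b)) (F.2 a b) + mul (cj (F.2 a b)) (F.1 a b) = rl A n2].
Proof.
move=> [sp te] hs d hJ.
have [[n1 hn1] [n2 hn2]] := sp a b d.
exists n1, n2.
have hN := is_stem_N hs; have hNc := is_stem_N (is_stem_conj hs).
have t1 := te (rl A a + b *: J) (ex_intro _ a (ex_intro _ b (ex_intro _ J (conj d (conj hJ erefl))))).
have t2 := te (rl A a + b *: (- J))
  (ex_intro _ a (ex_intro _ b (ex_intro _ (- J) (conj d (conj (sph_neg hJ) erefl))))).
rewrite (slice_eval hN d hJ) (slice_eval hNc d hJ) in t1.
rewrite (slice_eval hN d (sph_neg hJ)) (slice_eval hNc d (sph_neg hJ)) in t2.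
move: hn1 hn2 t1 t2; rewrite /Nstem /stem_mul /stem_conj /= !aconjK.
move=> hn1 hn2 t1 t2.
have [e1 e2] := two_eq hJ t1 t2.
by split => //; rewrite -?e1 -?e2.
Qed.

Lemma nonreal_pt a b J : sphere A J -> is_real A (rl A a + b *: J) -> b = 0.
Proof.
move=> hJ [r e]; have e' : rl A a + b *: J = rl A r + 0 *: J by rewrite scale0r addr0.
have [_ H] := rep_unique hJ hJ e'.
case: H => [[h _]|[[h _]|[h _]]] //.
- by rewrite -[b]opprK -h oppr0.
Qed.

End Conc.

Close Scope classical_set_scope.
Unset Implicit Arguments. Set Strict Implicit.

Theorem proposition5p3 (R : realType) (V : vectType R) (A : altStarAlg V)
  (D : R -> R -> Prop) (F G : stem V) :
  (exists a b, D a b) ->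
  (forall a b, D a b -> D a (- b)) ->
  (exists J, sphere A J) ->
  is_stem D F -> is_stem D G -> tame A D F -> tame A D G ->
  (forall x, zeroset A D (stem_mul A F G) x ->
     zeroset A D (Nstem A F) x \/ zeroset A D (Nstem A G) x) /\
  (nonsingular A ->
   (forall x, inOmega A D x -> ~ is_real A x ->
      C_A A (sderiv A D F x) /\ C_A A (sderiv A D G x)) ->
   forall x, zeroset A D (stem_mul A F G) x ->
     exists y, (zeroset A D F y \/ zeroset A D G y) /\ in_sph A y x).
Proof.
move=> _ _ _ hF hG tF tG.
have key : forall a b J, D a b -> sphere A J ->
    slice_fun A D (stem_mul A F G) (rl A a + b *: J) = 0 ->
    exists n1 n2 m1 m2,
    [/\ (n1 = 0 /\ n2 = 0) \/ (m1 = 0 /\ m2 = 0),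
     [/\ amul A (F.1 a b) (aconj A (F.1 a b)) - amul A (F.2 a b) (aconj A (F.2 a b)) = rl A n1,
      amul A (F.1 a b) (aconj A (F.2 a b)) + amul A (F.2 a b) (aconj A (F.1 a b)) = rl A n2,
      amul A (aconj A (F.1 a b)) (F.1 a b) - amul A (aconj A (F.2 a b)) (F.2 a b) = rl A n1 &
      amul A (aconj A (F.1 a b)) (F.2 a b) + amul A (aconj A (F.2 a b)) (F.1 a b) = rl A n2] &
     [/\ amul A (G.1 a b) (aconj A (G.1 a b)) - amul A (G.2 a b) (aconj A (G.2 a b)) = rl A m1,
      amul A (G.1 a b) (aconj A (G.2 a b)) + amul A (G.2 a b) (aconj A (G.1 a b)) = rl A m2,
      amul A (aconj A (G.1 a b)) (G.1 a b) - amul A (aconj A (G.2 a b)) (G.2 a b) = rl A m1 &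
      amul A (aconj A (G.1 a b)) (G.2 a b) + amul A (aconj A (G.2 a b)) (G.1 a b) = rl A m2]].
  move=> a b J d hJ hz.
  have [n1 [n2 [f1 f2 f3 f4]]] := tame_pt tF hF d hJ.
  have [m1 [m2 [g1 g2 g3 g4]]] := tame_pt tG hG d hJ.
  exists n1, n2, m1, m2; split; [|by split|by split].
  rewrite (slice_eval (is_stem_mul A hF hG) d hJ) in hz.
  apply: (core1 (F := (F.1 a b, F.2 a b)) (G := (G.1 a b, G.2 a b)) hJ);
    rewrite /mulC /cjC /= ?f1 ?f2 ?f3 ?f4 ?g1 ?g2 ?g3 ?g4 //.
split.
- move=> x [[a [b [J [d [hJ ->]]]]] hz].
  have [n1 [n2 [m1 [m2 [[[-> ->]|[-> ->]] [f1 f2 f3 f4] [g1 g2 g3 g4]]]]]] := key a b J d hJ hz.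
  + left; split; first by exists a, b, J.
    rewrite (slice_eval (is_stem_N A hF) d hJ) /Nstem /stem_mul /stem_conj /=.
    by rewrite f1 f2 rl0 (m0r (altA A)) addr0.
  + right; split; first by exists a, b, J.
    rewrite (slice_eval (is_stem_N A hG) d hJ) /Nstem /stem_mul /stem_conj /=.
    by rewrite g1 g2 rl0 (m0r (altA A)) addr0.
- move=> ns hCA x [[a [b [J [d [hJ ex]]]]] hz]; subst x.
  have hC : b != 0 -> C_A A (sderiv A D F (rl A a + b *: J)) /\ C_A A (sderiv A D G (rl A a + b *: J)).
    move=> b0; apply: hCA; first by exists a, b, J.
    by move=> /(nonreal_pt hJ) /eqP; rewrite (negbTE b0).
  have [n1 [n2 [m1 [m2 [[[e1 e2]|[e1 e2]] [f1 f2 f3 f4] [g1 g2 g3 g4]]]]]] := key a b J d hJ hz.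
  + subst n1 n2; rewrite rl0 in f1 f2 f3 f4.
    have [y [hy1 hy2]] := lemma2 ns hF d hJ (fun b0 => (hC b0).1) f1 f2 f3 f4.
    by exists y; split => //; left.
  + subst m1 m2; rewrite rl0 in g1 g2 g3 g4.
    have [y [hy1 hy2]] := lemma2 ns hG d hJ (fun b0 => (hC b0).2) g1 g2 g3 g4.
    by exists y; split => //; right.
Qed.
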